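(* Let $G$ be a strong $(\ell,d)$-graph. Then for any two strong $(\ell,d)$-partitions $\pi$ and $\pi'$ of $G$, the graphs $\phi(G,\pi)$ and $\phi(G,\pi')$ are identical.
   Context: For $U,W\subseteq V(G)$, $\Delta(U,W)=\max\{|N(u)\cap W|,|N(x)\cap U|:u\in U,x\in W\}$, and $\overline\Delta(U,W)$ likewise with $\overline N(v)=V(G)\setminus(N(v)\cup\{v\})$. A partition $\pi=\{V_1,\dots,V_{\ell'}\}$ of $V(G)$ is an $(\ell,d)$-partition if $\ell'\le\ell$ and every pair $(V_i,V_j)$ (not necessarily distinct) is $d$-sparse ($\Delta(V_i,V_j)\le d$) or $d$-dense ($\overline\Delta(V_i,V_j)\le d$); strong if each bag has at least $5\cdot2^\ell d$ vertices. The density graph $H(G,\pi)$ has vertex set $\{1,\dots,\ell'\}$, with edge $ij$ (a loop if $i=j$) iff $(V_i,V_j)$ is $d$-dense. For a graph $H'$ with loops on $\{1,\dots,\ell'\}$, $\psi(G,\pi,H')$ is obtained from $G$ by replacing, for each edge $ij$ of $H'$ with $i\ne j$, the bipartite graph between $V_i$ and $V_j$ by its bipartite complement, and, for each loop at $i$, $G[V_i]$ by its complement. Finally $\phi(G,\pi)=\psi(G,\pi,H(G,\pi))$. *)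

(* Defs.v *)
From mathcomp Require Import all_boot.
Set Implicit Arguments. Unset Strict Implicit. Unset Printing Implicit Defensive.

Definition simple_graph (T : finType) (G : rel T) : Prop :=
  symmetric G /\ irreflexive G.

Section Defs.
Variables (T : finType) (G : rel T).

Definition nbhd (v : T) : {set T} := [set u | G v u].
Definition conbhd (v : T) : {set T} := ~: (nbhd v :|: [set v]).

Definition sparse_pair (d : nat) (U W : {set T}) : bool :=
  [forall u in U, #|nbhd u :&: W| <= d] && [forall x in W, #|nbhd x :&: U| <= d].

Definition dense_pair (d : nat) (U W : {set T}) : bool :=
  [forall u in U, #|conbhd u :&: W| <= d] && [forall x in W, #|conbhd x :&: U| <= d].

Definition ld_partition (l d : nat) (P : {set {set T}}) : Prop :=
  partition P [set: T] /\ #|P| <= l /\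
  forall Vi Vj, Vi \in P -> Vj \in P -> sparse_pair d Vi Vj || dense_pair d Vi Vj.

Definition strong_ld_partition (l d : nat) (P : {set {set T}}) : Prop :=
  ld_partition l d P /\ forall Vi, Vi \in P -> 5 * 2 ^ l * d <= #|Vi|.

Definition strong_ld_graph (l d : nat) : Prop :=
  exists P, strong_ld_partition l d P.

(* phi(G,pi): for x in V_i, y in V_j, adjacency of x,y is flipped exactly when
   ij is an edge/loop of the density graph H(G,pi), i.e. (V_i,V_j) is d-dense
   (bipartite complement between V_i,V_j for i<>j; complement of G[V_i] for a
   loop at i). *)
Definition phi (d : nat) (P : {set {set T}}) : rel T :=
  fun x y => if x == y then false
             else G x y (+) dense_pair d (pblock P x) (pblock P y).

End Defs.

(* Main.v *)
Require Import Defs.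
From mathcomp Require Import all_boot.
From mathcomp Require Import zify.

Section Aux.
Variables (T : finType) (G : rel T).

Lemma dense_sym d U W : dense_pair G d U W = dense_pair G d W U.
Proof. by rewrite /dense_pair andbC. Qed.

Lemma cell_imp d (U U' W W' : {set T}) v :
  v \in U -> v \in U' -> 2 * d + 2 <= #|W :&: W'| ->
  sparse_pair G d U' W' || dense_pair G d U' W' ->
  dense_pair G d U W -> dense_pair G d U' W'.
Proof.
move=> vU vU' hK hor hd.
case/orP: hor => // hs; exfalso.
move/andP: hd => [/forall_inP hd _].
move/andP: hs => [/forall_inP hs _].
have h1 := hd v vU; have h2 := hs v vU'.
set K := W :&: W' in hK.
have sub : K \subset (nbhd G v :&: W') :|: (conbhd G v :&: W) :|: [set v].
  apply/subsetP => z; rewrite !inE => /andP [zW zW'].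
  rewrite zW zW' /= !andbT.
  by case: (G v z); case: (z == v).
have := subset_leq_card sub.
have [c1 _] := leq_card_setU ((nbhd G v :&: W') :|: (conbhd G v :&: W)) [set v].
have [c2 _] := leq_card_setU (nbhd G v :&: W') (conbhd G v :&: W).
rewrite cards1 in c1.
lia.
Qed.

Lemma cell d (U U' W W' : {set T}) v :
  v \in U -> v \in U' -> 2 * d + 2 <= #|W :&: W'| ->
  sparse_pair G d U W || dense_pair G d U W ->
  sparse_pair G d U' W' || dense_pair G d U' W' ->
  dense_pair G d U W = dense_pair G d U' W'.
Proof.
move=> vU vU' hK h1 h2; apply/idP/idP.
  exact: cell_imp vU vU' hK h2.
by apply: cell_imp vU' vU _ h1; rewrite setIC.
Qed.

Lemma card_bigcup_le (I : finType) (A : {pred I}) (F : I -> {set T}) :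
  #|\bigcup_(i in A) F i| <= \sum_(i in A) #|F i|.
Proof.
apply: (big_ind2 (fun (a : {set T}) (b : nat) => #|a| <= b)).
- by rewrite cards0.
- move=> x1 x2 y1 y2 h1 h2.
  have [h _] := leq_card_setU x1 y1; lia.
- by [].
Qed.

Lemma partner l d (P P' : {set {set T}}) W :
  0 < d -> W \in P -> 5 * 2 ^ l * d <= #|W| ->
  partition P' [set: T] -> #|P'| <= l ->
  exists2 C, C \in P' & 2 * d + 2 <= #|W :&: C|.
Proof.
move=> d0 WP hW hP' hl.
case: (boolP [exists C in P', 2 * d + 2 <= #|W :&: C|]).
  by case/exists_inP => C CP hC; exists C.
rewrite negb_exists_in => /forall_inP hall; exfalso.
have sub : W \subset \bigcup_(C in P') (W :&: C).
  apply/subsetP => z zW.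
  have : z \in cover P' by rewrite (cover_partition hP') inE.
  case/bigcupP => C CP zC; apply/bigcupP; exists C => //.
  by rewrite inE zW.
have h1 := subset_leq_card sub.
have h2 := @card_bigcup_le _ (mem P') (fun C => W :&: C).
have h3 : \sum_(C in P') #|W :&: C| <= \sum_(C in P') (2 * d + 1).
  apply: leq_sum => C CP; have := hall C CP; rewrite -ltnNge; lia.
rewrite sum_nat_const in h3.
have h4 : l < 2 ^ l by apply: ltn_expl.
move: h1 h2 h3 h4 hW hl d0.
set e := 2 ^ l; move=> h1 h2 h3 h4 hW hl d0.
have h5 : #|P'| * (2 * d + 1) <= l * (2 * d + 1) by apply: leq_mul.
have h6 : l * (2 * d + 1) < 5 * e * d by nia.
have := leq_trans h1 (leq_trans h2 (leq_trans h3 h5)).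
lia.
Qed.

End Aux.

Theorem proposition2p7 (T : finType) (G : rel T) (l d : nat) :
  simple_graph G ->
  strong_ld_graph G l d ->
  forall P P' : {set {set T}},
    strong_ld_partition G l d P ->
    strong_ld_partition G l d P' ->
    forall x y : T, phi G d P x y = phi G d P' x y.
Proof.
move=> _ _ P P' [[hP [hl hpair]] hsz] [[hP' [hl' hpair']] hsz'] x y.
rewrite /phi; case: eqP => // /eqP nxy; congr (_ (+) _).
have mem (Q : {set {set T}}) z : partition Q [set: T] -> z \in pblock Q z.
  by move=> hQ; rewrite mem_pblock (cover_partition hQ) inE.
have memP (Q : {set {set T}}) z : partition Q [set: T] -> pblock Q z \in Q.
  by move=> hQ; apply: pblock_mem; rewrite (cover_partition hQ) inE.
case: (posnP d) => [d0 | dpos].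
  subst d.
  suff key : forall Q, partition Q [set: T] ->
      (forall Vi Vj, Vi \in Q -> Vj \in Q -> sparse_pair G 0 Vi Vj || dense_pair G 0 Vi Vj) ->
      dense_pair G 0 (pblock Q x) (pblock Q y) = G x y.
    by rewrite (key P hP hpair) (key P' hP' hpair').
  move=> Q hQ hQp.
  have xA := mem Q x hQ; have yB := mem Q y hQ.
  case hG: (G x y).
    case/orP: (hQp _ _ (memP Q x hQ) (memP Q y hQ)) => // /andP [/forall_inP hs _].
    have := hs x xA; rewrite leqn0 cards_eq0 => /eqP e.
    have : y \in (set0 : {set T}) by rewrite -e !inE hG yB.
    by rewrite inE.
  apply/negbTE/negP => /andP [/forall_inP hd _].
  have := hd x xA; rewrite leqn0 cards_eq0 => /eqP e.
  have : y \in (set0 : {set T}).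
    by rewrite -e !inE yB andbT negb_or /= hG /= eq_sym nxy.
  by rewrite inE.
set A := pblock P x; set B := pblock P y; set A' := pblock P' x; set B' := pblock P' y.
have AP : A \in P := memP P x hP. have BP : B \in P := memP P y hP.
have AP' : A' \in P' := memP P' x hP'. have BP' : B' \in P' := memP P' y hP'.
have xA : x \in A := mem P x hP. have yB : y \in B := mem P y hP.
have xA' : x \in A' := mem P' x hP'. have yB' : y \in B' := mem P' y hP'.
have [C CP hC] := @partner _ l d _ _ _ dpos BP (hsz B BP) hP' hl'.
have [W WP hW] := @partner _ l d _ _ _ dpos AP' (hsz' A' AP') hP hl.
rewrite setIC in hW.
have [v] : exists v, v \in W :&: A'.
  apply/set0Pn; rewrite -card_gt0; lia.
rewrite inE => /andP [vW vA'].
have e1 : dense_pair G d A B = dense_pair G d A' C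
  := @cell _ G d _ _ _ _ _ xA xA' hC (hpair _ _ AP BP) (hpair' _ _ AP' CP).
have e2 : dense_pair G d W B = dense_pair G d A' C
  := @cell _ G d _ _ _ _ _ vW vA' hC (hpair _ _ WP BP) (hpair' _ _ AP' CP).
have e3 : dense_pair G d B W = dense_pair G d B' A'
  := @cell _ G d _ _ _ _ _ yB yB' hW (hpair _ _ BP WP) (hpair' _ _ BP' AP').
by rewrite e1 -e2 dense_sym e3 dense_sym.
Qed.
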